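(* Let $n$ be a positive integer. There exists a form $F\in\mathbb{Z}[x_1,\ldots,x_n]$ (a polynomial $F\in\mathbb{Z}[x]$ if $n=1$), a prime number $p$, and $M>0$ such that $R(F)$ is dense in $\mathbb{Q}_p$, but $R(F)$ is not dense in $\mathbb{Q}_q$ for every prime $q>M$.
   Context: For $F\in\mathbb{Z}[x_1,\dots,x_n]$, $R(F)=\{F(\overline{x})/F(\overline{y}) : \overline{x},\overline{y}\in\mathbb{Z}^n,\ F(\overline{y})\neq 0\}$, and density is with respect to the $p$-adic (resp. $q$-adic) topology. *)

(* Defs.v *)
From HB Require Import structures.
From mathcomp Require Import all_boot all_order all_algebra.
From mathcomp Require Import mpoly.
Set Implicit Arguments. Unset Strict Implicit. Unset Printing Implicit Defensive.
Import Order.TTheory GRing.Theory Num.Theory.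
Local Open Scope ring_scope.

Definition padic_val (p : nat) (r : rat) : int :=
  (logn p `|numq r|%N)%:Z - (logn p `|denq r|%N)%:Z.

Definition padic_abs (p : nat) (r : rat) : rat :=
  if r == 0 then 0 else (p%:R : rat) ^ (- padic_val p r).

Definition ratio_set (n : nat) (F : {mpoly int[n]}) : rat -> Prop :=
  fun r => exists (x y : 'I_n -> int),
    F.@[y] != 0 /\ r = (F.@[x])%:~R / (F.@[y])%:~R.

(* A subset S of Q is dense in Q_p.  Since Q is dense in Q_p, this holds iff
   S is dense in Q for the p-adic absolute value. *)
Definition dense_in_Qp (p : nat) (S : rat -> Prop) : Prop :=
  forall (x eps : rat), 0 < eps -> exists2 s, S s & padic_abs p (s - x) < eps.

(* Main.v *)
Require Import Defs.
From mathcomp Require Import all_boot all_order all_algebra.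
From mathcomp Require Import mpoly.
From mathcomp Require Import zify ring.
Import Order.TTheory GRing.Theory Num.Theory.
Set Implicit Arguments. Unset Strict Implicit. Unset Printing Implicit Defensive.
Local Open Scope ring_scope.


Definition Fh (a b : int) : int :=
  b ^+ 15 * a ^+ 10 * (a - b) ^+ 15 * (a - 2 * b) ^+ 6 * (a - 3 * b) ^+ 24 * (a - 6 * b) ^+ 20.

Definition vq (q : nat) (z : int) : nat := logn q `|z|%N.

Lemma vqM q a b : prime q -> a != 0 -> b != 0 -> vq q (a * b) = (vq q a + vq q b)%N.
Proof. by move=> pq a0 b0; rewrite /vq abszM lognM // absz_gt0. Qed.
Lemma vqX q a e : vq q (a ^+ e) = (e * vq q a)%N.
Proof. by rewrite /vq abszX lognX. Qed.
Lemma vq_dvd q z t : prime q -> z != 0 -> ((q ^ t)%N %| z)%Z = (t <= vq q z)%N.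
Proof. by move=> pq z0; rewrite dvdzE /= pfactor_dvdn // absz_gt0. Qed.

Lemma coprime_small q t (k : int) : prime q -> k != 0 -> (`|k| < q)%N -> coprimez (q ^ t)%N k.
Proof.
move=> pq k0 lt; rewrite /coprimez /=; apply: coprimeXl.
rewrite prime_coprime //; apply/negP => /dvdn_leq.
by rewrite absz_gt0 k0 => /(_ isT); rewrite leqNgt lt.
Qed.

Lemma pair_dvd q t (a b r s : int) : prime q -> r != s -> (`|r - s| < q)%N ->
  ((q ^ t)%N %| a - r * b)%Z -> ((q ^ t)%N %| a - s * b)%Z ->
  ((q ^ t)%N %| a)%Z && ((q ^ t)%N %| b)%Z.
Proof.
move=> pq rs lt h1 h2.
have hb : ((q ^ t)%N %| b)%Z.
  have : ((q ^ t)%N %| (s - r) * b)%Z.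
    have -> : (s - r) * b = (a - r * b) - (a - s * b) by ring.
    by rewrite rpredB.
  rewrite Gauss_dvdzr //; apply: coprime_small => //.
    by rewrite subr_eq0 eq_sym.
  by rewrite -abszN opprB.
rewrite hb andbT.
have -> : a = (a - r * b) + r * b by ring.
by rewrite rpredD // dvdz_mull.
Qed.

Lemma pairB_dvd q t (a b r : int) :
  ((q ^ t)%N %| b)%Z -> ((q ^ t)%N %| a - r * b)%Z -> ((q ^ t)%N %| a)%Z.
Proof.
move=> h1 h2; have -> : a = (a - r * b) + r * b by ring.
by rewrite rpredD // dvdz_mull.
Qed.

Section QV.
Variables (q : nat) (a b : int).
Hypotheses (pq : prime q) (a0 : a != 0) (b0 : b != 0).
Let m := minn (vq q a) (vq q b).

Lemma lowerL r : a - r * b != 0 -> (m <= vq q (a - r * b))%N.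
Proof.
move=> nz; rewrite -vq_dvd //.
have ha : ((q ^ m)%N %| a)%Z by rewrite vq_dvd // geq_minl.
have hb : ((q ^ m)%N %| b)%Z by rewrite vq_dvd // geq_minr.
by rewrite rpredB ?dvdz_mull.
Qed.

Lemma pairLL r s : r != s -> (`|r - s| < q)%N -> a - r * b != 0 -> a - s * b != 0 ->
  (vq q (a - r * b) <= m)%N || (vq q (a - s * b) <= m)%N.
Proof.
move=> rs lt n1 n2; rewrite -geq_min.
set t := minn _ _.
have h1 : ((q ^ t)%N %| a - r * b)%Z by rewrite vq_dvd // geq_minl.
have h2 : ((q ^ t)%N %| a - s * b)%Z by rewrite vq_dvd // geq_minr.
case/andP: (pair_dvd pq rs lt h1 h2); rewrite !vq_dvd // => ha hb.
by rewrite leq_min ha hb.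
Qed.

Lemma pairBL r : a - r * b != 0 ->
  (vq q b <= m)%N || (vq q (a - r * b) <= m)%N.
Proof.
move=> n1; rewrite -geq_min.
set t := minn _ _.
have h1 : ((q ^ t)%N %| b)%Z by rewrite vq_dvd // geq_minl.
have h2 : ((q ^ t)%N %| a - r * b)%Z by rewrite vq_dvd // geq_minr.
have := pairB_dvd h1 h2; rewrite vq_dvd // => ha.
by rewrite leq_min ha /t geq_minl.
Qed.
End QV.

Lemma combo (m tb ta t1 t2 t3 t6 : nat) :
  (m <= tb -> m <= ta -> m <= t1 -> m <= t2 -> m <= t3 -> m <= t6 ->
  (tb <= m) || (ta <= m) -> (tb <= m) || (t1 <= m) -> (tb <= m) || (t2 <= m) ->
  (tb <= m) || (t3 <= m) -> (tb <= m) || (t6 <= m) ->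
  (ta <= m) || (t1 <= m) -> (ta <= m) || (t2 <= m) -> (ta <= m) || (t3 <= m) -> (ta <= m) || (t6 <= m) ->
  (t1 <= m) || (t2 <= m) -> (t1 <= m) || (t3 <= m) -> (t1 <= m) || (t6 <= m) ->
  (t2 <= m) || (t3 <= m) -> (t2 <= m) || (t6 <= m) -> (t3 <= m) || (t6 <= m) ->
  let S := 15 * tb + 10 * ta + 15 * t1 + 6 * t2 + 24 * t3 + 20 * t6 in
  [|| (2 %| S) && (3 %| S), (2 %| S) && (5 %| S) | (3 %| S) && (5 %| S)])%N.
Proof.
move=> h1 h2 h3 h4 h5 h6.
case: (leqP tb m) => Hb; case: (leqP ta m) => Ha; case: (leqP t1 m) => H1;
case: (leqP t2 m) => H2; case: (leqP t3 m) => H3; case: (leqP t6 m) => H6;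
rewrite /= ?Hb ?Ha ?H1 ?H2 ?H3 ?H6 ?orbT ?orbF //= => *; try (exfalso; lia).
all: try lia.
Qed.

Lemma split_nz (x y : int) n : x * y ^+ n != 0 -> (0 < n)%N -> (x != 0) && (y != 0).
Proof. by move=> h n0; move: h; rewrite mulf_eq0 expf_eq0 n0 negb_or. Qed.
Lemma pow_nz (y : int) n : y ^+ n != 0 -> (0 < n)%N -> y != 0.
Proof. by move=> h n0; move: h; rewrite expf_eq0 n0. Qed.

Lemma Fh_nz a b : Fh a b != 0 ->
  [/\ b != 0, a != 0, a - b != 0, a - 2 * b != 0 & (a - 3 * b != 0) && (a - 6 * b != 0)].
Proof.
rewrite /Fh => h.
case/andP: (split_nz h isT) => {}h n6.
case/andP: (split_nz h isT) => {}h n3.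
case/andP: (split_nz h isT) => {}h n2.
case/andP: (split_nz h isT) => {}h n1.
case/andP: (split_nz h isT) => {}h na.
by split => //; [apply: pow_nz h _ | rewrite n3 n6].
Qed.

Lemma Fh_Q q a b : prime q -> (6 < q)%N -> Fh a b != 0 ->
  let S := vq q (Fh a b) in
  [|| (2 %| S) && (3 %| S), (2 %| S) && (5 %| S) | (3 %| S) && (5 %| S)]%N.
Proof.
move=> pq q6 nz.
case: (Fh_nz nz) => nb na n1 n2 /andP[n3 n6].
have e : vq q (Fh a b) = (15 * vq q b + 10 * vq q a + 15 * vq q (a - b) +
   6 * vq q (a - 2 * b) + 24 * vq q (a - 3 * b) + 20 * vq q (a - 6 * b))%N.
  have h6 (x1 x2 x3 x4 x5 x6 : int) : x1 != 0 -> x2 != 0 -> x3 != 0 -> x4 != 0 ->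
     x5 != 0 -> x6 != 0 -> vq q (x1 * x2 * x3 * x4 * x5 * x6) =
     (vq q x1 + vq q x2 + vq q x3 + vq q x4 + vq q x5 + vq q x6)%N.
    by move=> *; rewrite !vqM ?mulf_neq0.
  by rewrite /Fh h6 ?expf_neq0 // !vqX.
rewrite /= e.
have hq (k : int) : (`|k| <= 6)%N -> (`|k| < q)%N.
  by move=> h; apply: leq_ltn_trans h q6.
have ea : a = a - 0 * b by rewrite mul0r subr0.
have e1 : a - b = a - 1 * b by rewrite mul1r.
have na' : a - 0 * b != 0 by rewrite -ea.
have n1' : a - 1 * b != 0 by rewrite -e1.
have L0 := lowerL pq na nb na'. have L1 := lowerL pq na nb n1'.
have L2 := lowerL pq na nb n2. have L3 := lowerL pq na nb n3.
have L6 := lowerL pq na nb n6.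
have B0 := pairBL pq na nb na'. have B1 := pairBL pq na nb n1'.
have B2 := pairBL pq na nb n2. have B3 := pairBL pq na nb n3.
have B6 := pairBL pq na nb n6.
have P01 := @pairLL _ _ _ pq na nb 0 1 isT (hq (0 - 1) isT) na' n1'.
have P02 := @pairLL _ _ _ pq na nb 0 2 isT (hq (0 - 2) isT) na' n2.
have P03 := @pairLL _ _ _ pq na nb 0 3 isT (hq (0 - 3) isT) na' n3.
have P06 := @pairLL _ _ _ pq na nb 0 6 isT (hq (0 - 6) isT) na' n6.
have P12 := @pairLL _ _ _ pq na nb 1 2 isT (hq (1 - 2) isT) n1' n2.
have P13 := @pairLL _ _ _ pq na nb 1 3 isT (hq (1 - 3) isT) n1' n3.
have P16 := @pairLL _ _ _ pq na nb 1 6 isT (hq (1 - 6) isT) n1' n6.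
have P23 := @pairLL _ _ _ pq na nb 2 3 isT (hq (2 - 3) isT) n2 n3.
have P26 := @pairLL _ _ _ pq na nb 2 6 isT (hq (2 - 6) isT) n2 n6.
have P36 := @pairLL _ _ _ pq na nb 3 6 isT (hq (3 - 6) isT) n3 n6.
have Lb : (minn (vq q a) (vq q b) <= vq q b)%N by apply: geq_minr.
rewrite -ea -e1 in L0 L1 B0 B1 P01 P02 P03 P06 P12 P13 P16.
exact: (combo Lb L0 L1 L2 L3 L6 B0 B1 B2 B3 B6 P01 P02 P03 P06 P12 P13 P16 P23 P26 P36).
Qed.


Lemma val_ratio p (A B : int) : prime p -> A != 0 -> B != 0 ->
  padic_val p (A%:~R / B%:~R) = (vq p A)%:Z - (vq p B)%:Z.
Proof.
move=> pp A0 B0; set r : rat := _ / _.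
have hr : r != 0 by rewrite mulf_neq0 ?invr_eq0 ?intr_eq0.
have e : numq r * B = A * denq r.
  have : (numq r)%:~R / (denq r)%:~R = A%:~R / B%:~R :> rat by rewrite divq_num_den.
  move/eqP; rewrite eqr_div ?intr_eq0 ?denq_neq0 // -!intrM => /eqP.
  exact: intr_inj.
have := congr1 (vq p) e; rewrite !vqM ?numq_eq0 ?denq_neq0 //.
rewrite /padic_val -/(vq p (numq r)) -/(vq p (denq r)) => h.
lia.
Qed.

Lemma abs_ratio p (A B : int) : prime p -> A != 0 -> B != 0 ->
  padic_abs p (A%:~R / B%:~R) = (p%:R : rat) ^ (- ((vq p A)%:Z - (vq p B)%:Z)).
Proof.
move=> pp A0 B0; rewrite /padic_abs val_ratio //.
by rewrite mulf_eq0 invr_eq0 !intr_eq0 (negbTE A0) (negbTE B0).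
Qed.

Lemma vq_self q : prime q -> vq q q%:Z = 1%N.
Proof. by move=> pq; rewrite /vq /= logn_prime // eqxx. Qed.

Lemma ratio_not_near q (A B : int) : prime q -> B != 0 ->
  (A != 0 -> vq q A != (vq q B).+1) ->
  ~ (padic_abs q (A%:~R / B%:~R - q%:R) < (q%:R : rat) ^ (-1)).
Proof.
move=> pq B0 hv.
have q1 : (1 : rat) < q%:R by rewrite ltr1n prime_gt1.
have q0 : q%:Z != 0 by rewrite eqz_nat -lt0n prime_gt0.
case: (eqVneq A 0) => [->|A0].
  have -> : (0%:~R / B%:~R - q%:R : rat) = (- q%:Z)%:~R / 1%:~R.
    by rewrite mul0r sub0r divr1 rmorphN.
  rewrite abs_ratio // ?oppr_eq0 //.
  have -> : vq q (- q%:Z) = 1%N by rewrite /vq abszN; exact: vq_self.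
  have -> : vq q 1 = 0%N by rewrite /vq logn1.
  by rewrite lt_def eqxx.
have {}hv := hv A0.
set D := A - q%:Z * B.
have eD : (A%:~R / B%:~R - q%:R : rat) = D%:~R / B%:~R.
  rewrite /D intrD intrN intrM /=; field; by rewrite intr_eq0.
have D0 : D != 0.
  apply/negP => /eqP hD0.
  have : A = q%:Z * B by apply/eqP; rewrite -subr_eq0 -/D hD0.
  move/(congr1 (vq q)); rewrite vqM // vq_self // => hA.
  by rewrite hA eqxx in hv.
have hD : (vq q D <= (vq q B).+1)%N.
  rewrite leqNgt; apply/negP => lt.
  have dD : ((q ^ (vq q B).+2)%N %| D)%Z by rewrite vq_dvd.
  have eA : A = D + q%:Z * B by rewrite /D subrK.
  case: (ltngtP (vq q A) (vq q B).+1) => hc; last by rewrite hc eqxx in hv.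
  - have dq : ((q ^ (vq q A).+1)%N %| q%:Z * B)%Z.
      by rewrite expnS PoszM dvdz_mul2l // vq_dvd // -ltnS.
    have : ((q ^ (vq q A).+1)%N %| A)%Z.
      rewrite {1}eA rpredD //; apply: (dvdz_trans _ dD); rewrite dvdzE /= dvdn_exp2l //; lia.
    by rewrite vq_dvd // ltnn.
  - have dA : ((q ^ (vq q B).+2)%N %| A)%Z by rewrite vq_dvd.
    have : ((q * q ^ (vq q B).+1)%N %| q%:Z * B)%Z.
      have -> : q%:Z * B = A - D by rewrite eA addrC addKr.
      by rewrite -expnS rpredB.
    by rewrite PoszM dvdz_mul2l // vq_dvd // ltnn.
rewrite eD abs_ratio //; apply/negP; rewrite -leNgt ler_eXz2l //.
lia.
Qed.


Definition cong (M x y : int) := (M %| x - y)%Z.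
Definition oddi (z : int) := cong 2 z 1.

Lemma congR M x : cong M x x.
Proof. by rewrite /cong subrr dvdz0. Qed.
Lemma congS M x y : cong M x y -> cong M y x.
Proof. by move=> h; rewrite /cong -opprB rpredN. Qed.
Lemma congT M x y z : cong M x y -> cong M y z -> cong M x z.
Proof.
rewrite /cong => h1 h2; have -> : x - z = (x - y) + (y - z) by ring.
exact: rpredD.
Qed.
Lemma congD M x y x' y' : cong M x y -> cong M x' y' -> cong M (x + x') (y + y').
Proof.
rewrite /cong => h1 h2; have -> : x + x' - (y + y') = (x - y) + (x' - y') by ring.
exact: rpredD.
Qed.
Lemma congM M x y x' y' : cong M x y -> cong M x' y' -> cong M (x * x') (y * y').
Proof.
rewrite /cong => h1 h2; have -> : x * x' - y * y' = x * (x' - y') + (x - y) * y' by ring.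
by rewrite rpredD //; [apply: dvdz_mull | apply: dvdz_mulr].
Qed.
Lemma congX M x y n : cong M x y -> cong M (x ^+ n) (y ^+ n).
Proof. by rewrite /cong subrXX => h; rewrite dvdz_mulr. Qed.
Lemma congW M M' x y : (M' %| M)%Z -> cong M x y -> cong M' x y.
Proof. by rewrite /cong => h1 h2; apply: dvdz_trans h2. Qed.
Lemma cong0 M x y k : (M %| k)%Z -> cong M x y -> cong M (k + x) y.
Proof.
rewrite /cong => h1 h2; have -> : k + x - y = k + (x - y) by ring.
exact: rpredD.
Qed.
Lemma congMl M x y z : cong M x y -> cong M (z * x) (z * y).
Proof. by move=> h; apply: congM (congR _ _) h. Qed.

Lemma oddiM x y : oddi x -> oddi y -> oddi (x * y).
Proof. by move=> h1 h2; have := congM h1 h2; rewrite mulr1. Qed.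
Lemma oddiX x n : oddi x -> oddi (x ^+ n).
Proof. by move=> h; have := congX n h; rewrite expr1n. Qed.
Lemma odd_not2 z : oddi z -> ~~ (2 %| z)%Z.
Proof.
move=> h; apply/negP => h2; have : (2 %| z - (z - 1))%Z by rewrite rpredB.
by rewrite opprB addrC subrK.
Qed.
Lemma not2_odd z : ~~ (2 %| z)%Z -> oddi z.
Proof.
move=> h; rewrite /oddi /cong; apply/dvdzP; exists (z %/ 2)%Z.
have e := divz_eq z 2; have h0 := modz_ge0 z (isT : (2:int) != 0).
have h1 := ltz_pmod z (isT : (0:int) < 2).
have : (z %% 2)%Z != 0 by apply: contra h => /eqP /dvdz_mod0P.
lia.
Qed.
Lemma odd_plus_even z k : (2 %| k)%Z -> oddi z -> oddi (k + z).
Proof. exact: cong0. Qed.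
Lemma oddi1 : oddi 1.
Proof. exact: congR. Qed.
Lemma oddiN z : oddi z -> oddi (- z).
Proof.
rewrite /oddi /cong => h; have -> : - z - 1 = - (z - 1) - 2 by ring.
by rewrite rpredB ?rpredN ?dvdzz.
Qed.

Lemma pow2_cong K z : oddi z -> cong (2 ^+ K.+1) (z ^+ (2 ^ K)) 1.
Proof.
move=> hz; elim: K => [|K IH]; first by rewrite expn0 expr1.
rewrite /cong expnS mulnC exprM.
have -> : (z ^+ (2 ^ K)) ^+ 2 - 1 = (z ^+ (2 ^ K) - 1) * ((z ^+ (2 ^ K) - 1) + 2) by ring.
rewrite exprS mulrC; apply: dvdz_mul => //.
rewrite rpredD ?dvdzz //; apply: dvdz_trans IH; rewrite exprS dvdz_mulr //.
Qed.

Lemma vq2_odd z : oddi z -> vq 2 z = 0%N.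
Proof.
move=> /odd_not2 h; by rewrite /vq logn_coprime // prime_coprime //.
Qed.

Lemma vq2_form (a : nat) (z : int) : oddi z -> vq 2 (2 ^+ a * z) = a.
Proof.
move=> h; have z0 : z != 0 by apply: contraTneq h => ->; rewrite /oddi /cong sub0r.
have e2 : vq 2 2 = 1%N by [].
by rewrite vqM // ?expf_neq0 // vqX e2 vq2_odd // muln1 addn0.
Qed.


Lemma f_expand t : Fh t 1 = t ^+ 10 * (t - 1) ^+ 15 * (t - 2) ^+ 6 * (t - 3) ^+ 24 * (t - 6) ^+ 20.
Proof. by rewrite /Fh expr1n mul1r !mulr1. Qed.

Lemma fa i (h : int) : Fh (1 + 2 * 2 ^+ i * h) 1 = 2 ^+ (39 + 15 * i) *
  (h ^+ 15 * ((1 + 2 * 2 ^+ i * h) ^+ 10 * (2 * 2 ^+ i * h - 1) ^+ 6 *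
     (2 ^+ i * h - 1) ^+ 24 * (2 * 2 ^+ i * h - 5) ^+ 20)).
Proof.
rewrite f_expand exprD mulnC exprM.
move: (2 ^+ i) => pi.
have -> : 1 + 2 * pi * h - 1 = 2 * pi * h by ring.
have -> : 1 + 2 * pi * h - 2 = 2 * pi * h - 1 by ring.
have -> : 1 + 2 * pi * h - 3 = 2 * (pi * h - 1) by ring.
have -> : 1 + 2 * pi * h - 6 = 2 * pi * h - 5 by ring.
move: (1 + 2 * pi * h) (2 * pi * h - 1) (pi * h - 1) (2 * pi * h - 5) => x1 x2 x3 x4.
rewrite !exprMn; ring.
Qed.

Lemma fb j : Fh (2 + 8 * 2 ^+ j) 1 = 2 ^+ (68 + 6 * j) *
  ((1 + 4 * 2 ^+ j) ^+ 10 * (1 + 8 * 2 ^+ j) ^+ 15 * (8 * 2 ^+ j - 1) ^+ 24 * (2 * 2 ^+ j - 1) ^+ 20).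
Proof.
rewrite f_expand exprD mulnC exprM.
move: (2 ^+ j) => pj.
have -> : 2 + 8 * pj = 2 * (1 + 4 * pj) by ring.
have -> : 2 * (1 + 4 * pj) - 1 = 1 + 8 * pj by ring.
have -> : 2 * (1 + 4 * pj) - 2 = 8 * pj by ring.
have -> : 2 * (1 + 4 * pj) - 3 = 8 * pj - 1 by ring.
have -> : 2 * (1 + 4 * pj) - 6 = 4 * (2 * pj - 1) by ring.
move: (1 + 4 * pj) (1 + 8 * pj) (8 * pj - 1) (2 * pj - 1) => x1 x2 x3 x4.
rewrite !exprMn; ring.
Qed.

Lemma fc j : Fh (3 + 4 * 2 ^+ j) 1 = 2 ^+ (63 + 24 * j) *
  ((3 + 4 * 2 ^+ j) ^+ 10 * (1 + 2 * 2 ^+ j) ^+ 15 * (1 + 4 * 2 ^+ j) ^+ 6 * (4 * 2 ^+ j - 3) ^+ 20).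
Proof.
rewrite f_expand exprD mulnC exprM.
move: (2 ^+ j) => pj.
have -> : 3 + 4 * pj - 1 = 2 * (1 + 2 * pj) by ring.
have -> : 3 + 4 * pj - 2 = 1 + 4 * pj by ring.
have -> : 3 + 4 * pj - 3 = 4 * pj by ring.
have -> : 3 + 4 * pj - 6 = 4 * pj - 3 by ring.
move: (3 + 4 * pj) (1 + 2 * pj) (1 + 4 * pj) (4 * pj - 3) => x1 x2 x3 x4.
rewrite !exprMn; ring.
Qed.

Lemma oddi5 : oddi 5. Proof. by []. Qed.
Lemma oddi15 : oddi 15. Proof. by []. Qed.
Lemma oddi3 : oddi 3. Proof. by []. Qed.

Lemma two_dvd_2x (x y : int) : (2 %| 2 * x * y)%Z.
Proof. by rewrite -mulrA dvdz_mulr. Qed.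

Lemma fifteen K : exists t : nat, (15 ^ (2 ^ K) = 1 + 2 ^ K.+1 * t)%N.
Proof.
have h := pow2_cong K oddi15; rewrite /cong dvdzE in h.
have e : (15 : int) ^+ (2 ^ K) - 1 = Posz (15 ^ (2 ^ K) - 1)%N.
  by rewrite -subzn ?expn_gt0 // -!natz natrX.
rewrite e /= abszX in h.
case/dvdnP: h => t ht; exists t.
by rewrite mulnC -ht subnKC // expn_gt0.
Qed.

Lemma flex K (X Y Q : int) (i : nat) : oddi X -> oddi Y -> oddi Q -> (K <= i)%N -> (0 < i)%N ->
  exists a P, [/\ Fh a 1 = 2 ^+ (39 + 15 * i) * P, oddi P & cong (2 ^+ K) (P * Y) (Q * X)].
Proof.
move=> oX oY oQ Ki i0.
pose u := 5 ^+ 20 * Y.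
have ou : oddi u by rewrite /u; apply: oddiM; [apply: oddiX; exact: oddi5 | exact: oY].
pose n1 := (2 ^ K).-1.
have eK : (2 ^ K = n1.+1)%N by rewrite /n1 prednK // expn_gt0.
pose w := Q * X * u ^+ n1.
have ow : oddi w by rewrite /w; apply: oddiM; [exact: oddiM oQ oX | apply: oddiX; exact: ou].
pose h := w ^+ (15 ^ n1).
have oh : oddi h by apply: oddiX.
pose pi : int := 2 ^+ i.
pose P0 := (1 + 2 * pi * h) ^+ 10 * (2 * pi * h - 1) ^+ 6 * (pi * h - 1) ^+ 24 * (2 * pi * h - 5) ^+ 20.
exists (1 + 2 * pi * h), (h ^+ 15 * P0); split.
- by rewrite fa.
- apply: oddiM; first exact: oddiX.
  have e2 : (2 %| pi)%Z by rewrite /pi -(prednK i0) exprS dvdz_mulr.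
  apply: oddiM; last by apply: oddiX; apply: odd_plus_even (two_dvd_2x _ _) (oddiN oddi5).
  apply: oddiM; last by apply: oddiX; apply: odd_plus_even (dvdz_mulr _ e2) (oddiN oddi1).
  apply: oddiM; last by apply: oddiX; apply: odd_plus_even (two_dvd_2x _ _) (oddiN oddi1).
  by apply: oddiX; rewrite addrC; apply: odd_plus_even (two_dvd_2x _ _) oddi1.
- have c1 : cong (2 ^+ K) (h ^+ 15) w.
    have [t ht] := fifteen K.
    have -> : h ^+ 15 = w * (w ^+ (2 ^ K.+1)) ^+ t.
      by rewrite /h -exprM -expnSr -eK ht exprD expr1 exprM.
    have := congMl w (congX t (pow2_cong K.+1 ow)); rewrite expr1n mulr1.
    apply: congW; apply: dvdz_exp2l; lia.
  have c2 : cong (2 ^+ K) P0 (5 ^+ 20).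
    have dp : (pi %| 2 * pi * h)%Z by rewrite -mulrA; apply: dvdz_mull; apply: dvdz_mulr; exact: dvdzz.
    apply: (@congW pi); first exact: dvdz_exp2l.
    have -> : (5 : int) ^+ 20 = 1 ^+ 10 * (-1) ^+ 6 * (-1) ^+ 24 * (-5) ^+ 20 by ring.
    apply: congM; last by apply: congX; apply: cong0 dp (congR _ _).
    apply: congM; last by apply: congX; apply: cong0 (dvdz_mulr _ (dvdzz _)) (congR _ _).
    apply: congM; last by apply: congX; apply: cong0 dp (congR _ _).
    by apply: congX; rewrite addrC; apply: cong0 dp (congR _ _).
  have c3 := congM (congM c1 c2) (congR (2 ^+ K) Y).
  apply: (congT c3).
  have -> : w * 5 ^+ 20 * Y = Q * X * u ^+ (2 ^ K).
    rewrite eK (exprSr u) /w; move: (u ^+ n1) => U; rewrite /u; ring.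
  have := congMl (Q * X) (congW (dvdz_exp2l 2 (leqnSn K)) (pow2_cong K ou)).
  by rewrite mulr1.
Qed.

Lemma core1 K (X Y : int) (i j : nat) : oddi X -> oddi Y -> (K <= i)%N -> (0 < i)%N ->
  exists a b (P Q : int), [/\ Fh a 1 = 2 ^+ (39 + 15 * i) * P, Fh b 1 = 2 ^+ (68 + 6 * j) * Q,
    oddi P, oddi Q & cong (2 ^+ K) (P * Y) (Q * X)].
Proof.
move=> oX oY Ki i0.
pose pj : int := 2 ^+ j.
pose Q := (1 + 4 * pj) ^+ 10 * (1 + 8 * pj) ^+ 15 * (8 * pj - 1) ^+ 24 * (2 * pj - 1) ^+ 20.
have e4 : (2 %| 4 * pj)%Z by apply: dvdz_mulr.
have e8 : (2 %| 8 * pj)%Z by apply: dvdz_mulr.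
have e2 : (2 %| 2 * pj)%Z by apply: dvdz_mulr.
have oQ : oddi Q.
  rewrite /Q; apply: oddiM; last by apply: oddiX; apply: odd_plus_even e2 (oddiN oddi1).
  apply: oddiM; last by apply: oddiX; apply: odd_plus_even e8 (oddiN oddi1).
  apply: oddiM; last by apply: oddiX; rewrite addrC; apply: odd_plus_even e8 oddi1.
  by apply: oddiX; rewrite addrC; apply: odd_plus_even e4 oddi1.
have [a [P [ea oP c]]] := flex oX oY oQ Ki i0.
by exists a, (2 + 8 * pj), P, Q; split => //; rewrite fb.
Qed.

Lemma core0 K (X Y : int) (i j : nat) : oddi X -> oddi Y -> (K <= i)%N -> (0 < i)%N ->
  exists a b (P Q : int), [/\ Fh a 1 = 2 ^+ (39 + 15 * i) * P, Fh b 1 = 2 ^+ (63 + 24 * j) * Q,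
    oddi P, oddi Q & cong (2 ^+ K) (P * Y) (Q * X)].
Proof.
move=> oX oY Ki i0.
pose pj : int := 2 ^+ j.
pose Q := (3 + 4 * pj) ^+ 10 * (1 + 2 * pj) ^+ 15 * (1 + 4 * pj) ^+ 6 * (4 * pj - 3) ^+ 20.
have e4 : (2 %| 4 * pj)%Z by apply: dvdz_mulr.
have e2 : (2 %| 2 * pj)%Z by apply: dvdz_mulr.
have oQ : oddi Q.
  rewrite /Q; apply: oddiM; last by apply: oddiX; apply: odd_plus_even e4 (oddiN oddi3).
  apply: oddiM; last by apply: oddiX; rewrite addrC; apply: odd_plus_even e4 oddi1.
  apply: oddiM; last by apply: oddiX; rewrite addrC; apply: odd_plus_even e2 oddi1.
  by apply: oddiX; rewrite addrC; apply: odd_plus_even e4 oddi3.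
have [a [P [ea oP c]]] := flex oX oY oQ Ki i0.
by exists a, (3 + 4 * pj), P, Q; split => //; rewrite fc.
Qed.

Lemma nat_of (z : int) : 0 <= z -> exists n : nat, z = n%:Z.
Proof. by move=> h; exists `|z|%N; rewrite gez0_abs. Qed.

Definition Core (V : int) K (X Y : int) := exists a b (al be : nat) (P Q : int),
  [/\ Fh a 1 = 2 ^+ al * P, Fh b 1 = 2 ^+ be * Q, oddi P, oddi Q &
      (al%:Z - be%:Z = V) /\ cong (2 ^+ K) (P * Y) (Q * X)].

Lemma core_1 V K (X Y : int) (c : int) : oddi X -> oddi Y -> V = 3 * c + 1 -> Core V K X Y.
Proof.
move=> oX oY eV.
pose d := c + 10.
pose t : int := (`|d|%N)%:Z + K%:Z + 1.
have [i ei] : exists i : nat, d + 2 * t = i%:Z by apply: nat_of; rewrite /t; lia.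
have [j ej] : exists j : nat, 2 * d + 5 * t = j%:Z by apply: nat_of; rewrite /t; lia.
have Ki : (K <= i)%N by rewrite /t in ei; lia.
have i0 : (0 < i)%N by rewrite /t in ei; lia.
have [a [b [P [Q [ea eb oP oQ cg]]]]] := core1 j oX oY Ki i0.
exists a, b, (39 + 15 * i)%N, (68 + 6 * j)%N, P, Q; split => //; split => //.
rewrite /d in ei ej; lia.
Qed.

Lemma core_0 V K (X Y : int) (c : int) : oddi X -> oddi Y -> V = 3 * c -> Core V K X Y.
Proof.
move=> oX oY eV.
pose d := c + 8.
pose t : int := (`|d|%N)%:Z + K%:Z + 1.
have [i ei] : exists i : nat, - 3 * d + 8 * t = i%:Z by apply: nat_of; rewrite /t; lia.
have [j ej] : exists j : nat, - 2 * d + 5 * t = j%:Z by apply: nat_of; rewrite /t; lia.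
have Ki : (K <= i)%N by rewrite /t in ei; lia.
have i0 : (0 < i)%N by rewrite /t in ei; lia.
have [a [b [P [Q [ea eb oP oQ cg]]]]] := core0 j oX oY Ki i0.
exists a, b, (39 + 15 * i)%N, (63 + 24 * j)%N, P, Q; split => //; split => //.
rewrite /d in ei ej; lia.
Qed.

Lemma core V K (X Y : int) : oddi X -> oddi Y -> Core V K X Y \/ Core (- V) K Y X.
Proof.
move=> oX oY.
have e := divz_eq V 3; have h0 := modz_ge0 V (isT : (3:int) != 0).
have h1 := ltz_pmod V (isT : (0:int) < 3).
have [r0|[r1|r2]] : (V %% 3)%Z = 0 \/ (V %% 3)%Z = 1 \/ (V %% 3)%Z = 2 by lia.
- by left; apply: (@core_0 _ _ _ _ (V %/ 3)%Z) => //; lia.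
- by left; apply: (@core_1 _ _ _ _ (V %/ 3)%Z) => //; lia.
- by right; apply: (@core_1 _ _ _ _ (- (V %/ 3)%Z - 1)) => //; lia.
Qed.


Lemma pow2E k : ((2 ^ k)%N : int) = 2 ^+ k.
Proof. by rewrite -natz natrX. Qed.

Lemma oddi_neq0 z : oddi z -> z != 0.
Proof. by move=> h; apply: contraTneq h => ->; rewrite /oddi /cong sub0r. Qed.

Lemma decomp z : z != 0 -> exists (e : nat) (Z : int), z = 2 ^+ e * Z /\ oddi Z.
Proof.
move=> z0; set v := vq 2 z.
have d : ((2 ^ v)%N %| z)%Z by rewrite vq_dvd.
set Z := (z %/ (2 ^ v)%N)%Z.
have ez : z = Z * (2 ^ v)%N by rewrite /Z divzK.
exists v, Z; split; first by rewrite {1}ez -pow2E mulrC.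
apply: not2_odd; apply/negP => h2.
have : (((2 * 2 ^ v)%N : int) %| z)%Z by rewrite ez PoszM; apply: dvdz_mul h2 (dvdzz _).
by rewrite -expnS vq_dvd // ltnn.
Qed.

Lemma final (x eps : rat) (N a0 b0 al be K : nat) (X Y P Q A B : int) :
  0 < eps -> numq x = 2 ^+ a0 * X -> denq x = 2 ^+ b0 * Y ->
  oddi X -> oddi Y -> oddi P -> oddi Q -> A = 2 ^+ al * P -> B = 2 ^+ be * Q ->
  al%:Z - be%:Z = a0%:Z - b0%:Z -> (N%:Z <= a0%:Z - b0%:Z + K%:Z) ->
  cong (2 ^+ K) (P * Y) (Q * X) -> ((2 : rat) ^+ N)^-1 < eps ->
  padic_abs 2 (A%:~R / B%:~R - x) < eps.
Proof.
move=> e0 en ed oX oY oP oQ eA eB eV hN c hE.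
have B0 : B != 0 by rewrite eB; apply: mulf_neq0; [exact: expf_neq0 | exact: oddi_neq0].
pose Num := A * denq x - numq x * B.
pose Den := B * denq x.
have D0 : Den != 0 by apply: mulf_neq0; rewrite ?denq_neq0.
have es : (A%:~R / B%:~R - x : rat) = Num%:~R / Den%:~R.
  rewrite -{1}(divq_num_den x) /Num /Den intrD intrN !intrM /=.
  field; by rewrite ?intr_eq0 ?denq_neq0.
rewrite es; case: (eqVneq Num 0) => [->|N0].
  by rewrite mul0r /padic_abs eqxx.
rewrite abs_ratio //.
set g := (al + b0)%N.
have eg : (a0 + be)%N = g by rewrite /g; lia.
have eNum : Num = 2 ^+ g * (P * Y - Q * X).
  rewrite /Num en ed eA eB; transitivity (2 ^+ (al + b0) * P * Y - 2 ^+ (a0 + be) * X * Q).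
    by rewrite !exprD; ring.
  by rewrite eg /g; ring.
have eDen : Den = 2 ^+ (be + b0) * (Q * Y).
  by rewrite /Den eB ed exprD; ring.
have vD : vq 2 Den = (be + b0)%N by rewrite eDen vq2_form // oddiM.
have vN : (g + K <= vq 2 Num)%N.
  rewrite -vq_dvd // pow2E eNum exprD; apply: dvdz_mul => //; exact: dvdzz.
apply: le_lt_trans hE.
rewrite exprnN ler_eXz2l ?ltr1n //.
rewrite vD; lia.
Qed.

Lemma nz_form (b : int) (be : nat) (Q : int) : Fh b 1 = 2 ^+ be * Q -> oddi Q -> Fh b 1 != 0.
Proof. by move=> -> oQ; apply: mulf_neq0; [exact: expf_neq0 | exact: oddi_neq0]. Qed.

Lemma Fh0 : Fh 0 1 = 0.
Proof.
have z : (0 : int) ^+ 10 = 0 by rewrite exprS mul0r.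
rewrite f_expand; move: (0 - 1) (0 - 2) (0 - 3) (0 - 6) => x1 x2 x3 x4.
by rewrite z !mul0r.
Qed.

Lemma dense2 (x eps : rat) : 0 < eps ->
  exists a b : int, Fh b 1 != 0 /\ padic_abs 2 ((Fh a 1)%:~R / (Fh b 1)%:~R - x) < eps.
Proof.
move=> e0.
have [N hN] : exists N : nat, ((2 : rat) ^+ N)^-1 < eps.
  pose n := Num.Def.archi_bound (eps^-1); exists n.
  have h : eps^-1 < n%:R by apply: archi_boundP; rewrite invr_ge0 ltW.
  have h2 : (n%:R : rat) <= 2 ^+ n by rewrite -natrX ler_nat ltnW // ltn_expl.
  rewrite invf_plt ?posrE ?exprn_gt0 //; exact: lt_le_trans h h2.
case: (eqVneq x 0) => [->|x0].
  have [[a [b [al [be [P [Q [ea eb oP oQ _]]]]]]]|[a [b [al [be [P [Q [ea eb oP oQ _]]]]]]]]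
    := core 0 0 oddi1 oddi1.
  - exists 0, b; split; first exact: nz_form eb oQ.
    by rewrite Fh0 mul0r subr0 /padic_abs eqxx.
  - exists 0, b; split; first exact: nz_form eb oQ.
    by rewrite Fh0 mul0r subr0 /padic_abs eqxx.
have nq : numq x != 0 by rewrite numq_eq0.
have [a0 [X [en oX]]] := decomp nq.
have [b0 [Y [ed oY]]] := decomp (denq_neq0 x).
pose V := a0%:Z - b0%:Z.
pose K := (N + `|V|)%N.
case: (core V K oX oY) => [[a [b [al [be [P [Q [ea eb oP oQ [eV c]]]]]]]]|
                          [a [b [al [be [P [Q [ea eb oP oQ [eV c]]]]]]]]].
- exists a, b; split; first exact: nz_form eb oQ.
  apply: (final e0 en ed oX oY oP oQ ea eb) => //; rewrite /K /V in eV *; lia.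
- exists b, a; split; first exact: nz_form ea oP.
  apply: (@final _ _ N _ _ _ _ K _ _ _ _ _ _ e0 en ed oX oY oQ oP eb ea) => //; last exact: congS.
  all: rewrite /K /V in eV *; lia.
Qed.

Lemma Fh_far q a b c d : prime q -> (6 < q)%N -> Fh c d != 0 ->
  ~ (padic_abs q ((Fh a b)%:~R / (Fh c d)%:~R - q%:R) < (q%:R : rat) ^ (-1)).
Proof.
move=> pq q6 nz; apply: ratio_not_near => // A0.
have h1 := Fh_Q pq q6 A0; have h2 := Fh_Q pq q6 nz.
move: h1 h2 => /=; lia.
Qed.

Notation FP X Y :=
  (Y ^+ 15 * X ^+ 10 * (X - Y) ^+ 15 * (X - 2 *: Y) ^+ 6 * (X - 3 *: Y) ^+ 24 * (X - 6 *: Y) ^+ 20).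
Lemma mevalXn n (p : {mpoly int[n]}) (v : 'I_n -> int) k : (p ^+ k).@[v] = p.@[v] ^+ k.
Proof. exact: rmorphXn. Qed.
Lemma cm6 (x1 x2 x3 x4 x5 x6 y1 y2 y3 y4 y5 y6 : int) : x1 = y1 -> x2 = y2 -> x3 = y3 ->
  x4 = y4 -> x5 = y5 -> x6 = y6 -> x1 * x2 * x3 * x4 * x5 * x6 = y1 * y2 * y3 * y4 * y5 * y6.
Proof. by move=> -> -> -> -> -> ->. Qed.
Lemma evX n (X : {mpoly int[n]}) (v : 'I_n -> int) a k : X.@[v] = a -> (X ^+ k).@[v] = a ^+ k.
Proof. by move=> e; rewrite mevalXn e. Qed.
Lemma evB n (X Y : {mpoly int[n]}) (v : 'I_n -> int) a b (c : int) : X.@[v] = a -> Y.@[v] = b ->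
  (X - c *: Y).@[v] = a - c * b.
Proof. by move=> ea eb; rewrite mevalB mevalZ ea eb. Qed.
Lemma evB1 n (X Y : {mpoly int[n]}) (v : 'I_n -> int) a b : X.@[v] = a -> Y.@[v] = b ->
  (X - Y).@[v] = a - b.
Proof. by move=> ea eb; rewrite mevalB ea eb. Qed.

Lemma FP_eval n (X Y : {mpoly int[n]}) (v : 'I_n -> int) a b :
  X.@[v] = a -> Y.@[v] = b -> (FP X Y).@[v] = Fh a b.
Proof.
move=> ea eb.
have m6 (A B C D E G : {mpoly int[n]}) :
  (A * B * C * D * E * G).@[v] = A.@[v] * B.@[v] * C.@[v] * D.@[v] * E.@[v] * G.@[v].
  by rewrite !mevalM.
apply: (etrans (m6 _ _ _ _ _ _)).
apply: cm6; apply: evX => //; [exact: evB1 | exact: evB | exact: evB | exact: evB].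
Qed.

Lemma homX n (i : 'I_n) : ('X_i : {mpoly int[n]}) \is 1.-homog.
Proof. by rewrite dhomogX /= mdeg1. Qed.

Definition vec n (a : int) : 'I_n -> int := fun i => if val i == 0%N then a else 1.

Unset Implicit Arguments.

Theorem theorem1p7 (n : nat) (hn : (0 < n)%N) :
  exists (F : {mpoly int[n]}) (p M : nat),
    [/\ (1 < n)%N -> exists d : nat, F \is d.-homog,
        prime p,
        (0 < M)%N,
        dense_in_Qp p (ratio_set F)
      & forall q : nat, prime q -> (M < q)%N -> ~ dense_in_Qp q (ratio_set F)].
Proof.
pose i0 : 'I_n := Ordinal hn.
have [Y [hY1 hY2]] : exists Y : {mpoly int[n]},
    ((1 < n)%N -> Y \is 1.-homog) /\ forall a, Y.@[@vec n a] = 1.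
  case: (ltnP 1 n) => h1.
    exists 'X_(Ordinal h1); split => [_|a]; first exact: homX.
    by rewrite mevalXU /vec /=.
  exists 1; split => [h|a]; first by exfalso; lia.
  by rewrite meval1.
pose X : {mpoly int[n]} := 'X_i0.
have hX : forall a, X.@[@vec n a] = a by move=> a; rewrite /X mevalXU /vec /=.
exists (FP X Y), 2%N, 6%N; split => //.
- move=> h1; have hY := hY1 h1; have hX1 : X \is 1.-homog by exact: homX.
  exists (1 * 15 + 1 * 10 + 1 * 15 + 1 * 6 + 1 * 24 + 1 * 20)%N.
  repeat apply: dhomogM; apply: dhomogMn => //.
  + by apply: rpredB.
  + by apply: rpredB => //; apply: dhomogZ.
  + by apply: rpredB => //; apply: dhomogZ.
  + by apply: rpredB => //; apply: dhomogZ.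
- move=> x eps e0; have [a [b [nz h]]] := dense2 x e0.
  exists ((Fh a 1)%:~R / (Fh b 1)%:~R) => //.
  exists (@vec n a), (@vec n b).
  rewrite (FP_eval (hX a) (hY2 a)) (FP_eval (hX b) (hY2 b)); split => //.
- move=> q pq q6 H.
  have qpos : (0 : rat) < q%:R ^ (-1) by apply: exprz_gt0; rewrite ltr0n prime_gt0.
  have [s [x [y [ynz es]]] hs] := H q%:R (q%:R ^ (-1)) qpos.
  rewrite (FP_eval (erefl (X.@[x])) (erefl (Y.@[x]))) in es.
  rewrite (FP_eval (erefl (X.@[y])) (erefl (Y.@[y]))) in es ynz.
  rewrite es in hs.
  exact: (Fh_far pq q6 ynz hs).
Qed.
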